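(* Fix a single-item interdependent-values setting and let $\mathcal M$ be a universally ex-post IC-IR mechanism that is an $\alpha$-approximation to the optimal welfare, i.e., for every signal profile $\mathbf s$ the expected welfare of $\mathcal M$ when all bidders bid truthfully ($\mathbf b=\mathbf s$) is at least $\mathrm{OPT}(\mathbf s)/\alpha$. For $\epsilon\in(0,1)$ let $\mathcal M'$ be the randomized mechanism that runs $\mathcal M$ with probability $1-\epsilon$ and the proportional allocation mechanism with probability $\epsilon$. Then the price of anarchy of $\mathcal M'$ with respect to pure Nash equilibria under no-overbidding is at most $\frac{\alpha}{1-\epsilon}$: for every signal profile $\mathbf s$ and every pure Nash equilibrium $\mathbf b$ of $\mathcal M'$ at $\mathbf s$ under no-overbidding, $\mathrm{OPT}(\mathbf s)\le\frac{\alpha}{1-\epsilon}\,\mathbb E[\mathrm{SW}_{\mathcal M'}(\mathbf b,\mathbf s)]$.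
   Context: Single-item interdependent-values setting: bidders $i\in[n]$ have private signals $s_i\in S_i\subseteq\mathbb R_{\ge0}$ (intervals) and publicly known valuations $v_i:S_1\times\dots\times S_n\to\mathbb R_{\ge0}$, weakly increasing in every coordinate and strictly increasing in $s_i$. A deterministic mechanism $(x,p)$ solicits bids $b_i\in S_i$, outputs $x_i(\mathbf b)\in\{0,1\}$ with $\sum_ix_i\le1$ and payments $p_i(\mathbf b)$; utility $u_i(\mathbf b;\mathbf s)=x_i(\mathbf b)v_i(\mathbf s)-p_i(\mathbf b)$. Ex-post IC-IR: for every $\mathbf s$, $i$, $b_i\in S_i$: $x_i(\mathbf s)v_i(\mathbf s)-p_i(\mathbf s)\ge\max\{x_i(b_i,\mathbf s_{-i})v_i(\mathbf s)-p_i(b_i,\mathbf s_{-i}),0\}$. Universally ex-post IC-IR: a probability distribution over deterministic ex-post IC-IR mechanisms. Proportional allocation mechanism: given $\mathbf b$, allocates the item to bidder $i$ with probability $\frac{b_i}{\sum_jb_j+1}$ and charges no payments. $\mathrm{OPT}(\mathbf s)=\max_iv_i(\mathbf s)$; $\mathrm{SW}_{\mathcal M'}(\mathbf b,\mathbf s)=\sum_ix_i(\mathbf b)v_i(\mathbf s)$ (random). A pure Nash equilibrium at $\mathbf s$ under no-overbidding is a bid profile $\mathbf b\le\mathbf s$ such that for every $i$ and every $b_i'\in S_i$ with $b_i'\le s_i$, $\mathbb E[u_i((b_i',\mathbf b_{-i});\mathbf s)]\le\mathbb E[u_i(\mathbf b;\mathbf s)]$ (expectations over the mechanism's randomness). 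*)

(* Defs.v *)
From HB Require Import structures.
From mathcomp Require Import all_boot all_order all_algebra.
From mathcomp Require Import all_classical all_reals all_analysis.
Set Implicit Arguments. Unset Strict Implicit. Unset Printing Implicit Defensive.
Import Order.TTheory GRing.Theory Num.Theory.
Local Open Scope ring_scope.

Definition signal_spaces (n : nat) (R : realType) (S : 'I_n -> interval R) :=
  forall i x, x \in S i -> 0 <= x.

Definition in_prof (n : nat) (R : realType) (S : 'I_n -> interval R)
  (b : 'I_n -> R) := forall i, b i \in S i.

Definition upd (n : nat) (R : realType) (b : 'I_n -> R) (i : 'I_n) (t : R) :
  'I_n -> R := fun j => if j == i then t else b j.

Definition valuations (n : nat) (R : realType) (S : 'I_n -> interval R)
  (v : 'I_n -> ('I_n -> R) -> R) :=
  [/\ (forall i s, in_prof S s -> 0 <= v i s),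
      (forall i j s t, in_prof S s -> t \in S j -> s j <= t ->
          v i s <= v i (upd s j t)) &
      (forall i s t, in_prof S s -> t \in S i -> s i < t ->
          v i s < v i (upd s i t))].

(* Deterministic mechanism: winner (None = no allocation, so x_i in {0,1}
   and sum_i x_i <= 1) and payments. *)
Record dmech (n : nat) (R : realType) := DMech {
  winner : ('I_n -> R) -> option 'I_n;
  pay : 'I_n -> ('I_n -> R) -> R }.

Definition alloc (n : nat) (R : realType) (M : dmech n R) (i : 'I_n)
  (b : 'I_n -> R) : R := if winner M b == Some i then 1 else 0.

Definition util (n : nat) (R : realType) (v : 'I_n -> ('I_n -> R) -> R)
  (M : dmech n R) (i : 'I_n) (b s : 'I_n -> R) : R :=
  alloc M i b * v i s - pay M i b.

Definition expost_ICIR (n : nat) (R : realType) (S : 'I_n -> interval R)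
  (v : 'I_n -> ('I_n -> R) -> R) (M : dmech n R) :=
  forall s, in_prof S s -> forall i t, t \in S i ->
    Num.max (util v M i (upd s i t) s) 0 <= util v M i s s.

(* Universally ex-post IC-IR: a probability distribution P on a measurable
   space Omega of deterministic ex-post IC-IR mechanisms M w (with the
   measurability / integrability needed for expectations to exist). *)
Definition universal_ICIR (n : nat) (R : realType) (d : measure_display)
  (Omega : measurableType d) (P : probability Omega R)
  (S : 'I_n -> interval R) (v : 'I_n -> ('I_n -> R) -> R)
  (M : Omega -> dmech n R) :=
  [/\ (forall w, expost_ICIR S v (M w)),
      (forall i b, in_prof S b ->
          measurable_fun setT (fun w => alloc (M w) i b)) &
      (forall i b, in_prof S b ->
          P.-integrable setT (fun w => (pay (M w) i b)%:E))].

Definition OPT (n : nat) (R : realType) (v : 'I_n -> ('I_n -> R) -> R)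
  (s : 'I_n -> R) : R := \big[Num.max/0]_(i < n) v i s.

Definition ESW (n : nat) (R : realType) (d : measure_display)
  (Omega : measurableType d) (P : probability Omega R)
  (v : 'I_n -> ('I_n -> R) -> R) (M : Omega -> dmech n R)
  (b s : 'I_n -> R) : R :=
  Rintegral P setT (fun w => \sum_(i < n) alloc (M w) i b * v i s).

(* Proportional allocation: probability b_i / (sum_j b_j + 1), no payments *)
Definition pa_alloc (n : nat) (R : realType) (b : 'I_n -> R) (i : 'I_n) : R :=
  b i / (\sum_(j < n) b j + 1).

Definition mix_util (n : nat) (R : realType) (d : measure_display)
  (Omega : measurableType d) (P : probability Omega R)
  (v : 'I_n -> ('I_n -> R) -> R) (M : Omega -> dmech n R) (eps : R)
  (i : 'I_n) (b s : 'I_n -> R) : R :=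
  (1 - eps) * Rintegral P setT (fun w => util v (M w) i b s)
  + eps * (pa_alloc b i * v i s).

Definition mix_ESW (n : nat) (R : realType) (d : measure_display)
  (Omega : measurableType d) (P : probability Omega R)
  (v : 'I_n -> ('I_n -> R) -> R) (M : Omega -> dmech n R) (eps : R)
  (b s : 'I_n -> R) : R :=
  (1 - eps) * ESW P v M b s + eps * \sum_(i < n) pa_alloc b i * v i s.

Definition is_PNE_no_overbid (n : nat) (R : realType) (d : measure_display)
  (Omega : measurableType d) (P : probability Omega R)
  (S : 'I_n -> interval R) (v : 'I_n -> ('I_n -> R) -> R)
  (M : Omega -> dmech n R) (eps : R) (b s : 'I_n -> R) :=
  [/\ in_prof S b, (forall i, b i <= s i) &
      (forall i t, t \in S i -> t <= s i ->
         mix_util P v M eps i (upd b i t) s <= mix_util P v M eps i b s)].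

(* Main.v *)
Require Import Defs.
From HB Require Import structures.
From mathcomp Require Import all_boot all_order all_algebra.
From mathcomp Require Import all_classical all_reals all_analysis.
From mathcomp Require Import lra.
Import Order.TTheory GRing.Theory Num.Theory.
Local Open Scope ring_scope.

Section Aux.
Variables (n : nat) (R : realType) (S : 'I_n -> interval R)
  (v : 'I_n -> ('I_n -> R) -> R).

Lemma upd_prof (b : 'I_n -> R) i t :
  in_prof S b -> t \in S i -> in_prof S (upd b i t).
Proof. by move=> hb ht j; rewrite /upd; case: eqP => [->|]. Qed.

Lemma upd_id (b : 'I_n -> R) i : upd b i (b i) = b.
Proof. by apply/funext => j; rewrite /upd; case: eqP => [->|]. Qed.

Lemma upd_upd (b : 'I_n -> R) i t t' : upd (upd b i t) i t' = upd b i t'.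
Proof. by apply/funext => j; rewrite /upd; case: eqP. Qed.

Lemma upd_eq (b : 'I_n -> R) i t : upd b i t i = t.
Proof. by rewrite /upd eqxx. Qed.

Lemma v_mono i (x y : 'I_n -> R) : valuations S v ->
  in_prof S x -> in_prof S y -> (forall j, x j <= y j) -> v i x <= v i y.
Proof.
move=> [_ hm _] hx hy hxy.
pose z (k : nat) := fun j : 'I_n => if (j < k)%N then y j else x j.
have zP k : in_prof S (z k) by move=> j; rewrite /z; case: ifP.
suff H : forall k, v i x <= v i (z k).
  have -> : y = z n by apply/funext => j; rewrite /z ltn_ord.
  exact: H.
elim=> [|k IH].
  by have -> : z 0%N = x by apply/funext => j; rewrite /z ltn0.
case: (ltnP k n) => hk.
  pose o := Ordinal hk.
  have -> : z k.+1 = upd (z k) o (y o).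
    apply/funext => j; rewrite /z /upd ltnS leq_eqVlt.
    case: (eqVneq j o) => [->|hne]; first by rewrite /= eqxx.
    have -> : (nat_of_ord j == k) = false.
      by apply/negbTE/eqP => hj; move/eqP: hne; apply; apply: val_inj.
    by [].
  apply: le_trans IH _; apply: hm => //.
  by rewrite /z ltnn.
have -> : z k.+1 = z k.
  apply/funext => j; rewrite /z.
  have h1 : (j < k.+1)%N by apply: leq_trans (ltn_ord j) _; apply: leqW.
  have h2 : (j < k)%N by apply: leq_trans (ltn_ord j) _.
  by rewrite h1 h2.
exact: IH.
Qed.

Lemma alloc01 (D : dmech n R) i b : alloc D i b = 0 \/ alloc D i b = 1.
Proof. by rewrite /alloc; case: eqP; [right|left]. Qed.

Lemma pointwise (D : dmech n R) i (b s : 'I_n -> R) :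
  valuations S v -> expost_ICIR S v D -> in_prof S b -> in_prof S s ->
  (forall j, b j <= s j) -> b i < s i ->
  util v D i b s <= util v D i (upd b i (s i)) s.
Proof.
move=> hv hic hb hs hbs hlt.
have hSi : s i \in S i by apply: hs.
set b' := upd b i (s i).
have hb' : in_prof S b' by apply: upd_prof.
have h1 := hic b' hb' i (b i) (hb i).
rewrite /b' upd_upd upd_id -/b' in h1.
have h2 := hic b hb i (s i) hSi.
rewrite -/b' in h2.
move: h1; rewrite ge_max => /andP [h1' _].
move: h2; rewrite ge_max => /andP [h2' _].
have hvb : v i b < v i b'.
  by case: hv => _ _ hst; apply: hst => //.
have hvs : v i b' <= v i s.
  apply: v_mono => // j; rewrite /b' /upd; case: eqP => [->|] //.
move: h1' h2'; rewrite /util.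
case: (alloc01 D i b) => ->; case: (alloc01 D i b') => -> h1' h2'; lra.
Qed.

Lemma util_integrable d (Omega : measurableType d) (P : probability Omega R)
  (M : Omega -> dmech n R) i b s :
  (forall b, in_prof S b -> measurable_fun setT (fun w => alloc (M w) i b)) ->
  (forall b, in_prof S b -> P.-integrable setT (fun w => (pay (M w) i b)%:E)) ->
  in_prof S b ->
  P.-integrable setT (EFin \o (fun w => util v (M w) i b s)).
Proof.
move=> hm hp hb.
have ha : P.-integrable setT (fun w => (alloc (M w) i b)%:E).
  apply: (@le_integrable _ _ _ _ _ measurableT _ (EFin \o cst 1)).
  - by apply/measurable_realfun.measurable_EFinP; apply: hm.
  - move=> w _ /=; rewrite lee_fin; case: (alloc01 (M w) i b) => ->.
      by rewrite normr0.
    by rewrite normr1.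
  - exact: finite_measure_integrable_cst.
have -> : EFin \o (fun w => util v (M w) i b s) =
    ((fun w => (v i s)%:E * (alloc (M w) i b)%:E) \- (fun w => (pay (M w) i b)%:E))%E.
  by apply/funext => w /=; rewrite /util -EFinM -EFinB mulrC.
apply: integrableB => //; last exact: hp.
exact: integrableZl.
Qed.

Lemma frac_lt (a x y : R) : 0 < a -> 0 <= x -> x < y -> x / (x + a) < y / (y + a).
Proof.
move=> ha hx hxy.
have hxa : 0 < x + a by lra.
have hya : 0 < y + a by lra.
rewrite ltr_pdivrMr // mulrAC ltr_pdivlMr //.
nra.
Qed.

End Aux.

Theorem mainTheorem8 (n : nat) (R : realType) (d : measure_display)
  (Omega : measurableType d) (P : probability Omega R)
  (S : 'I_n -> interval R) (v : 'I_n -> ('I_n -> R) -> R)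
  (M : Omega -> dmech n R) (alpha eps : R) :
  signal_spaces S -> valuations S v -> universal_ICIR P S v M ->
  0 < alpha ->
  (forall s, in_prof S s -> OPT v s / alpha <= ESW P v M s s) ->
  0 < eps -> eps < 1 ->
  forall s b, in_prof S s -> is_PNE_no_overbid P S v M eps b s ->
  OPT v s <= alpha / (1 - eps) * mix_ESW P v M eps b s.
Proof.
move=> hS hv [hic hm hp] ha happ he0 he1 s b hs [hb hbs hne].
have hvnn := hv.
case: hvnn => hv0 _ hvst.
have beq : forall i, b i = s i.
  move=> i; apply/eqP; rewrite eq_le hbs /=; rewrite leNgt; apply/negP => hlt.
  have hSi : s i \in S i by apply: hs.
  set b' := upd b i (s i).
  have hb' : in_prof S b' by apply: upd_prof.
  have hdev := hne i (s i) hSi (lexx _).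
  rewrite -/b' in hdev.
  have hvpos : 0 < v i s.
    have := hvst i (upd s i (b i)) (s i) (@upd_prof _ _ S s i (b i) hs (hb i)) hSi.
    rewrite upd_eq upd_upd upd_id => /(_ hlt) h.
    apply: le_lt_trans h; apply: hv0; exact: upd_prof.
  have hint : Rintegral P setT (fun w => util v (M w) i b s) <=
              Rintegral P setT (fun w => util v (M w) i b' s).
    apply: le_Rintegral => //.
    - exact: (@util_integrable _ _ S v _ _ P M i b s (hm i) (hp i) hb).
    - exact: (@util_integrable _ _ S v _ _ P M i b' s (hm i) (hp i) hb').
    - move=> w _; apply: (@pointwise _ _ S v) => //.
  have hpa : pa_alloc b i < pa_alloc b' i.
    rewrite /pa_alloc (bigD1 i) //= (bigD1 i (P:=predT)) //=.
    have -> : \sum_(j < n | j != i) b' j = \sum_(j < n | j != i) b j.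
      by apply: eq_bigr => j hj; rewrite /b' /upd (negbTE hj).
    rewrite /b' upd_eq -!addrA.
    apply: frac_lt => //.
      apply: ltr_pwDr => //; apply: sumr_ge0 => j _.
      exact: (hS j).
    exact: (hS i).
  move: hdev; rewrite /mix_util.
  have : eps * (pa_alloc b i * v i s) < eps * (pa_alloc b' i * v i s).
    by rewrite ltr_pM2l // ltr_pM2r.
  have h1e : 0 < 1 - eps by lra.
  have := ler_wpM2l (ltW h1e) hint.
  move=> ? ? ?; lra.
have -> : b = s by apply/funext.
have hE := happ s hs.
rewrite ler_pdivrMr // in hE.
have hX : 0 <= \sum_(i < n) pa_alloc s i * v i s.
  apply: sumr_ge0 => i _; apply: mulr_ge0; last exact: hv0.
  rewrite /pa_alloc; apply: divr_ge0; first exact: (hS i).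
  apply: addr_ge0 => //; apply: sumr_ge0 => j _; exact: (hS j).
rewrite /mix_ESW.
have h1e : 0 < 1 - eps by lra.
set k := alpha / (1 - eps).
have hk : k * (1 - eps) = alpha by rewrite /k divfK // gt_eqF.
have hk0 : 0 <= k by rewrite /k; apply: divr_ge0; lra.
have hkE : k * ((1 - eps) * ESW P v M s s) = alpha * ESW P v M s s by rewrite mulrA hk.
rewrite mulrDr hkE.
have : 0 <= k * (eps * \sum_(i < n) pa_alloc s i * v i s).
  by apply: mulr_ge0 => //; apply: mulr_ge0 => //; lra.
rewrite mulrC in hE.
lra.
Qed.
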